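(* Let $n\ge1$ and let $k$ be the localisation of the polynomial ring $\mathbb Z[s_1,\ldots,s_n]$ with respect to the multiplicative set of all homogeneous elements that are not divisible by any integer $>1$. For $j\ge1$ put $w_j=(s_1^j,\ldots,s_n^j)\in k^n$, and for $0\le i\le n$ let $W_i\subset k^n$ be the submodule generated by $w_1,\ldots,w_{n-i}$. Let $V\subset\mathbb Z^n$ be a direct summand and let $V'=V\otimes_{\mathbb Z}k\subset k^n$ be the induced direct summand of $k^n$. (1) If $\dim V=i$, then $V'\oplus W_i=k^n$. (2) If $\dim V>i$, then $V'\cap W_i$ contains an element which can be extended to a basis of $W_i$.
   Context: $\dim V$ denotes the rank of the free abelian group $V$. *)

(* Defs.v *)
From HB Require Import structures.
From mathcomp Require Import all_boot all_algebra.
From mathcomp.multinomials Require Import mpoly.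
Set Implicit Arguments. Unset Strict Implicit. Unset Printing Implicit Defensive.
Import GRing.Theory.
Local Open Scope ring_scope.

Definition Frac (n : nat) := {fraction {mpoly int[n]}}.

Definition emb n (p : {mpoly int[n]}) : Frac n := FracField.tofrac p.

Definition homogeneous n (p : {mpoly int[n]}) : Prop :=
  exists d : nat, forall m, m \in msupp p -> mdeg m = d.

Definition int_primitive n (p : {mpoly int[n]}) : Prop :=
  forall c : nat, (1 < c)%N -> ~ (exists q : {mpoly int[n]}, p = c%:R * q).

(* membership in k = localisation of Z[s] at homogeneous primitive elements,
   realised as a subring of the fraction field *)
Definition inK n (x : Frac n) : Prop :=
  exists p q : {mpoly int[n]},
    homogeneous q /\ int_primitive q /\ x = emb p / emb q.

Definition kvec n (v : 'rV[Frac n]_n) : Prop := forall j, inK (v 0 j).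

Definition kspan n (S : 'rV[Frac n]_n -> Prop) (x : 'rV[Frac n]_n) : Prop :=
  exists (m : nat) (c : 'I_m -> Frac n) (u : 'I_m -> 'rV[Frac n]_n),
    (forall j, inK (c j)) /\ (forall j, S (u j)) /\ x = \sum_(j < m) c j *: u j.

Definition kbasis n (M : 'rV[Frac n]_n -> Prop) (m : nat)
    (b : 'I_m -> 'rV[Frac n]_n) : Prop :=
  [/\ forall j, M (b j),
      (forall c : 'I_m -> Frac n, (forall j, inK (c j)) ->
          \sum_(j < m) c j *: b j = 0 -> forall j, c j = 0)
    & forall x, M x -> exists c : 'I_m -> Frac n,
          (forall j, inK (c j)) /\ x = \sum_(j < m) c j *: b j].

Definition wvec n (j : nat) : 'rV[Frac n]_n :=
  \row_(l < n) emb (('X_l : {mpoly int[n]}) ^+ j).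

Definition Wsub n (i : nat) : 'rV[Frac n]_n -> Prop :=
  kspan (fun x => exists j : nat, (1 <= j <= n - i)%N /\ x = wvec n j).

Definition zsubgroup n (V : 'rV[int]_n -> Prop) : Prop :=
  V 0 /\ forall x y, V x -> V y -> V (x - y).

Definition direct_summand n (V : 'rV[int]_n -> Prop) : Prop :=
  zsubgroup V /\
  exists U : 'rV[int]_n -> Prop, zsubgroup U /\
    (forall x, V x -> U x -> x = 0) /\
    (forall x, exists a b, V a /\ U b /\ x = a + b).

Definition zrank n (V : 'rV[int]_n -> Prop) (r : nat) : Prop :=
  exists b : 'I_r -> 'rV[int]_n,
    [/\ forall j, V (b j),
        (forall c : 'I_r -> int, \sum_(j < r) c j *: b j = 0 -> forall j, c j = 0)
      & forall x, V x -> exists c : 'I_r -> int, x = \sum_(j < r) c j *: b j].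

(* V' = V (x)_Z k, the k-span of the image of V in k^n *)
Definition induced n (V : 'rV[int]_n -> Prop) : 'rV[Frac n]_n -> Prop :=
  kspan (fun x => exists v, V v /\ x = map_mx (fun z : int => z%:~R) v).

(* Main.v *)
Require Import Defs.
From HB Require Import structures.
From mathcomp Require Import all_boot all_algebra.
From mathcomp.multinomials Require Import mpoly.
From mathcomp Require Import zify.
Set Implicit Arguments. Unset Strict Implicit. Unset Printing Implicit Defensive.
Import GRing.Theory.
Local Open Scope ring_scope.

Section KRing.
Variable n : nat.
Local Notation P := {mpoly int[n]}.

Lemma embD (p q : P) : emb (p + q) = emb p + emb q.
Proof. by rewrite /emb rmorphD. Qed.
Lemma embM (p q : P) : emb (p * q) = emb p * emb q.
Proof. by rewrite /emb rmorphM. Qed.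
Lemma embN (p : P) : emb (- p) = - emb p.
Proof. by rewrite /emb rmorphN. Qed.
Lemma emb1 : emb (1 : P) = 1.
Proof. by rewrite /emb rmorph1. Qed.
Lemma emb0 : emb (0 : P) = 0.
Proof. by rewrite /emb rmorph0. Qed.
Lemma emb_int (z : int) : emb (z%:~R : P) = z%:~R.
Proof. by rewrite /emb rmorph_int. Qed.
Lemma emb_eq0 (p : P) : (emb p == 0) = (p == 0).
Proof. by rewrite /emb tofrac_eq0. Qed.

Lemma mcoeff_natM (c : nat) (q : P) m : (c%:R * q)@_m = c%:R * q@_m.
Proof. by rewrite mulr_natl mcoeffMn mulr_natl. Qed.

Lemma prim_neq0 (q : P) : int_primitive q -> q != 0.
Proof.
move=> H; apply/eqP => q0; apply: (H 2%N) => //; exists 0; by rewrite q0 mulr0.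
Qed.

Lemma homogP' (q : P) : homogeneous q <-> exists d, q \is d.-homog.
Proof.
split=> [[d Hd]|[d /dhomogP Hd]]; exists d; first by apply/dhomogP=> m /Hd.
by move=> m /Hd.
Qed.

Lemma homogM (p q : P) : homogeneous p -> homogeneous q -> homogeneous (p * q).
Proof.
move=> /homogP' [d Hd] /homogP' [e He]; apply/homogP'; exists (d + e)%N.
exact: dhomogM.
Qed.

Lemma homog1 : homogeneous (1 : P).
Proof. apply/homogP'; exists 0%N; exact: dhomog1. Qed.

Lemma Fp_int_eq0 p (z : int) : prime p -> (z%:~R : 'F_p) = 0 -> (p %| z)%Z.
Proof.
move=> pp; case: z => k.
  move=> /eqP H; rewrite /dvdz unfold_in /= (dvdn_pcharf (pchar_Fp pp)); exact: H.
rewrite NegzE mulrNz => /eqP; rewrite oppr_eq0 => H.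
rewrite /dvdz unfold_in /= (dvdn_pcharf (pchar_Fp pp)); exact: H.
Qed.

Lemma div_out p (q : P) : prime p ->
  map_mpoly (intmul (1 : 'F_p)) q = 0 -> exists q', q = p%:R * q'.
Proof.
move=> pp H.
exists (\sum_(m <- msupp q) ((q@_m) %/ p)%Z *: 'X_[m]).
rewrite mulr_natl -(scaler_nat (R:=int)) scaler_sumr {1}(mpolyE q).
apply: eq_bigr => m _; rewrite scalerA; congr (_ *: _).
have: (p %| q@_m)%Z.
  apply: Fp_int_eq0 => //.
  by rewrite -(mcoeff_map_mpoly (intmul (1 : 'F_p))) H mcoeff0.
by move/divzK => E; rewrite natz mulrC E.
Qed.

Lemma primM (p q : P) : int_primitive p -> int_primitive q -> int_primitive (p * q).
Proof.
move=> Hp Hq c c1 [r E].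
have pp := pdiv_prime c1; have pc := pdiv_dvd c.
set l := pdiv c in pp pc.
pose pi := map_mpoly (intmul (1 : 'F_l)) : P -> {mpoly 'F_l[n]}.
have pi_c : pi (c%:R) = 0.
  rewrite /pi rmorph_nat.
  have : (c%:R : 'F_l) = 0 by apply/eqP; rewrite -(dvdn_pcharf (pchar_Fp pp)).
  by rewrite -(rmorph_nat (@mpolyC n _)) => ->; rewrite raddf0.
have : pi p * pi q = 0.
  have piM : forall a b, pi (a * b) = pi a * pi b.
    by move=> a b; rewrite /pi; exact: rmorphM.
  rewrite -piM E piM.
  by rewrite pi_c mul0r.
move/eqP; rewrite mulf_eq0 => /orP [] /eqP /(div_out pp) [q' E'].
  by apply: (Hp l) => //; [exact: prime_gt1 | exists q'].
by apply: (Hq l) => //; [exact: prime_gt1 | exists q'].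
Qed.

Lemma prim1 : int_primitive (1 : P).
Proof.
move=> c c1 [q /(congr1 (mcoeff 0%MM))].
rewrite mcoeff_natM mcoeff1 eqxx /= => /eqP.
set z := q@_0%MM.
move=> H; have := congr1 (fun x : int => `|x|%N) (esym (eqP H)).
rewrite natz abszM /= => E.
have : (c <= 1)%N by rewrite -E leq_pmulr // lt0n; apply/eqP => z0; rewrite z0 muln0 in E.
by rewrite leqNgt c1.
Qed.

Lemma inK_emb (p : P) : inK (emb p).
Proof.
exists p, 1; split; first exact: homog1; split; first exact: prim1.
by rewrite emb1 divr1.
Qed.

Lemma inK_div (p q : P) : homogeneous q -> int_primitive q -> inK (emb p / emb q).
Proof. by move=> h1 h2; exists p, q. Qed.

Lemma emb_prim_neq0 (q : P) : int_primitive q -> emb q != 0.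
Proof. by move/prim_neq0; rewrite emb_eq0. Qed.

Lemma inK0 : inK (0 : Frac n).
Proof. by rewrite -emb0; apply: inK_emb. Qed.

Lemma inK1 : inK (1 : Frac n).
Proof. by rewrite -emb1; apply: inK_emb. Qed.

Lemma inK_int (z : int) : inK (z%:~R : Frac n).
Proof. by rewrite -emb_int; apply: inK_emb. Qed.

Lemma inKD (x y : Frac n) : inK x -> inK y -> inK (x + y).
Proof.
move=> [p1 [q1 [h1 [r1 ->]]]] [p2 [q2 [h2 [r2 ->]]]].
exists (p1 * q2 + p2 * q1), (q1 * q2); split; first exact: homogM.
split; first exact: primM.
have n1 := emb_prim_neq0 r1; have n2 := emb_prim_neq0 r2.
rewrite embD !embM; exact: (@addf_div (Frac n) _ _ _ _ n1 n2).
Qed.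

Lemma inKM (x y : Frac n) : inK x -> inK y -> inK (x * y).
Proof.
move=> [p1 [q1 [h1 [r1 ->]]]] [p2 [q2 [h2 [r2 ->]]]].
exists (p1 * p2), (q1 * q2); split; first exact: homogM.
split; first exact: primM.
rewrite !embM; exact: (@mulf_div (Frac n)).
Qed.

Lemma inKN (x : Frac n) : inK x -> inK (- x).
Proof.
move=> [p1 [q1 [h1 [r1 ->]]]]; exists (- p1), q1; split => //; split => //.
by rewrite embN mulNr.
Qed.

Lemma inK_sum (I : Type) (r : seq I) (F : I -> Frac n) :
  (forall i, inK (F i)) -> inK (\sum_(i <- r) F i).
Proof.
move=> H; elim: r => [|a r IH]; first by rewrite big_nil; exact: inK0.
by rewrite big_cons; apply: inKD.
Qed.

End KRing.

Lemma dep_exists (F : fieldType) t m (A : 'M[F]_(t, m)) :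
  (\rank A < t)%N -> exists2 c : 'rV_t, c != 0 & c *m A = 0.
Proof.
move=> rk.
have : kermx A != 0.
  by rewrite kermx_eq0 /row_free; rewrite neq_ltn rk.
move=> /eqP nz.
have [i Hi] : exists i, row i (kermx A) != 0.
  apply/existsP; apply: contraT; rewrite negb_exists => /forallP H.
  by case: nz; apply/row_matrixP => i; rewrite row0; apply/eqP; move: (H i); rewrite negbK.
exists (row i (kermx A)) => //.
by rewrite -row_mul mulmx_ker row0.
Qed.

Lemma vdm_neq0 (K : fieldType) q (al : 'I_q -> K) :
  injective al -> (forall j, al j != 0) ->
  \det (\matrix_(j < q, j' < q) al j' ^+ j.+1) != 0.
Proof.
move=> inj nz.
pose a := \row_(j < q) al j.
have -> : \matrix_(j < q, j' < q) al j' ^+ j.+1 = Vandermonde q a *m diag_mx a.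
  apply/matrixP => j j'; rewrite mul_mx_diag !mxE exprSr //.
rewrite det_mulmx det_diag det_Vandermonde mulf_neq0 //.
  apply/prodf_neq0 => i _; apply/prodf_neq0 => j ij.
  rewrite !mxE subr_eq0; apply/eqP => /inj E.
  by rewrite E ltnn in ij.
by apply/prodf_neq0 => i _; rewrite mxE.
Qed.

Lemma split_sum (V : nmodType) n t (G : nat -> V) : (t <= n)%N ->
  \sum_(r < n) G r = \sum_(a < t) G a + \sum_(j < n - t) G (t + j)%N.
Proof.
move=> tn.
rewrite -!(big_mkord xpredT) (big_cat_nat (n:=t)) //=.
congr (_ + _); rewrite -{1}(add0n t) big_addn.
rewrite (big_mkord xpredT (fun i => G (i + t)%N)).
by apply: eq_bigr => i _; rewrite addnC.
Qed.

Lemma intK_neq0 p n (z : int) : (z%:~R : 'F_p) != 0 ->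
  (z%:~R : {fraction {mpoly 'F_p[n]}}) != 0.
Proof.
move=> H.
rewrite -(rmorph_int (@FracField.tofrac _ : {rmorphism {mpoly 'F_p[n]} -> _})).
rewrite -(rmorph_int (@mpolyC n 'F_p)) tofrac_eq0 mpolyC_eq0 //.
Qed.

Lemma X_inj (R : nzRingType) n : injective (fun l : 'I_n => ('X_l : {mpoly R[n]})).
Proof.
move=> a b /= E; have := congr1 (mcoeff U_(a)) E; rewrite !mcoeffXU eqxx.
by case: eqP => // _ /eqP; rewrite /= oner_eq0.
Qed.

Lemma X_neq0 (R : nzRingType) n (l : 'I_n) : ('X_l : {mpoly R[n]}) != 0.
Proof.
apply/eqP => E; have := congr1 (mcoeff U_(l)) E.
by rewrite mcoeffXU eqxx mcoeff0 => /eqP; rewrite oner_eq0.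
Qed.

Section Core.
Variables (n t : nat) (Bn : nat -> 'rV[int]_n).
Hypotheses (n0 : (0 < n)%N) (tn : (t <= n)%N).
Hypothesis Hfree : forall p, prime p -> forall c : 'rV['F_p]_t,
  \sum_(a < t) c 0 a *: map_mx (intmul 1) (Bn a) = 0 -> c = 0.

Definition rowsZ r : 'rV[{mpoly int[n]}]_n :=
  if (r < t)%N then map_mx (intmul 1) (Bn r) else \row_l ('X_l ^+ (r - t).+1).
Definition MZ : 'M[{mpoly int[n]}]_n := \matrix_(r < n, l < n) rowsZ r 0 l.

Lemma MZ_homog : homogeneous (\det MZ).
Proof.
apply/homogP'; exists (\sum_(i < n) (if (i < t)%N then 0 else (i - t).+1))%N.
apply: rpred_sum => s _; rewrite rpredMsign.
apply: (@big_ind2 _ _ (fun d (P : {mpoly int[n]}) => P \is d.-homog)).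
- exact: dhomog1.
- by move=> x1 x2 y1 y2 h1 h2; apply: dhomogM.
move=> i _; rewrite !mxE /rowsZ; case: ifP => _; rewrite !mxE.
  rewrite -[_%:~R]scaler_int; apply: dhomogZ; exact: dhomog1.
rewrite -[X in _ \is X.-homog]mul1n; apply: dhomogMn.
by rewrite dhomogX; apply/eqP; apply: mdeg1.
Qed.


Lemma MZ_prim : int_primitive (\det MZ).
Proof.
move=> c c1 [q E].
have pp := pdiv_prime c1; have pc := pdiv_dvd c.
set p := pdiv c in pp pc.
pose A : 'M['F_p]_(t, n) := \matrix_(a < t, l < n) (Bn a 0 l)%:~R.
have rkA : \rank A = t.
  apply/eqP; rewrite eqn_leq rank_leq_row /= leqNgt; apply/negP.
  move=> /dep_exists [y yn0 yA].
  move/negP: yn0; apply; apply/eqP; apply: (Hfree pp).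
  rewrite -[RHS]yA mulmx_sum_row; apply: eq_bigr => a _; congr (_ *: _).
  by apply/rowP => l; rewrite !mxE.
have rfA : row_full A^T by rewrite /row_full mxrank_tr rkA.
pose f := fullrankfun rfA.
have uf : rowsub f A^T \in unitmx := fullrowsub_unit rfA.
pose K := {fraction {mpoly 'F_p[n]}}.
pose sg : 'I_n -> K := fun l => if l \in codom f then 0 else (FracField.tofrac 'X_l).
pose phi := mmap (intmul (1 : K)) sg.
have phiM : forall a b, phi (a * b) = phi a * phi b.
  by move=> a b; rewrite /phi; exact: rmorphM.
have Kc : (c%:R : K) = 0.
  have H : (c%:R : 'F_p) = 0 by apply/eqP; rewrite -(dvdn_pcharf (pchar_Fp pp)).
  rewrite -(rmorph_nat (@FracField.tofrac _ : {rmorphism {mpoly 'F_p[n]} -> K})).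
  by rewrite -(rmorph_nat (@mpolyC n 'F_p)) H !raddf0.
have det0 : phi (\det MZ) = 0.
  rewrite E phiM.
  have -> : phi c%:R = c%:R by rewrite /phi; exact: rmorph_nat.
  by rewrite Kc mul0r.
suff : \det (map_mx phi MZ) != 0.
  have -> : \det (map_mx phi MZ) = phi (\det MZ) by rewrite /phi; exact: det_map_mx.
  by rewrite det0 eqxx.
pose Mk := map_mx phi MZ.
have MkE : forall r l : 'I_n, Mk r l =
    if (r < t)%N then (Bn r 0 l)%:~R else sg l ^+ (r - t).+1.
  move=> r l; rewrite !mxE /rowsZ; case: ifP => _; rewrite !mxE.
    by rewrite /phi; exact: rmorph_int.
  rewrite /phi rmorphXn /= mmapX mmap1U //.
apply/negP => /det0P [y yn0 yM].
pose i0 := Ordinal n0.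
pose Y r := y 0 (insubd i0 r).
have col : forall l, \sum_(a < t) Y a * (Bn a 0 l)%:~R +
    \sum_(j < n - t) Y (t + j)%N * sg l ^+ j.+1 = 0.
  move=> l; have := congr1 (fun v : 'rV_n => v 0 l) yM; rewrite !mxE /= => H.
  rewrite -[RHS]H.
  transitivity (\sum_(r < n) Y r * (if (r < t)%N then (Bn r 0 l)%:~R
            else sg l ^+ (r - t).+1)); last first.
    by apply: eq_bigr => i _; rewrite MkE /Y valKd.
  rewrite (split_sum (fun r => Y r * (if (r < t)%N then (Bn r 0 l)%:~R
            else sg l ^+ (r - t).+1)) tn).
  congr (_ + _); apply: eq_bigr => i _; first by rewrite ltn_ord.
  by rewrite ltnNge leq_addr /= addKn.
have YB : forall a, (a < t)%N -> Y a = 0.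
  pose yB : 'rV[K]_t := \row_a Y a.
  pose Xz : 'M[int]_t := \matrix_(a < t, a' < t) Bn a 0 (f a').
  pose X : 'M[K]_t := map_mx (intmul 1) Xz.
  have yX : yB *m X = 0.
    apply/rowP => a'; rewrite !mxE.
    have := col (f a'); rewrite [X in _ + X]big1 ?addr0.
      by move=> H; rewrite -[RHS]H; apply: eq_bigr => a _; rewrite !mxE.
    by move=> j _; rewrite /sg codom_f expr0n /= mulr0.
  have dX : \det X != 0.
    rewrite det_map_mx; apply: intK_neq0.
    have -> : ((\det Xz)%:~R : 'F_p) = \det (rowsub f A^T).
      rewrite -det_tr -det_map_mx; congr (\det _).
      by apply/matrixP => a a'; rewrite !mxE.
    by rewrite -unitfE -unitmxE.
  have yB0 : yB = 0.
    apply/eqP; apply: contraT => ynz.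
    have : \det X == 0 by apply/det0P; exists yB.
    by rewrite (negbTE dX).
  move=> a at'; have := congr1 (fun v : 'rV_t => v 0 (Ordinal at')) yB0.
  by rewrite !mxE.
pose J := enum [pred l : 'I_n | l \notin codom f].
have sJ : (n - t <= size J)%N.
  rewrite -cardE.
  have := cardC (mem (codom f)); rewrite card_ord => HC.
  have Hc : (#|mem (codom f)| <= t)%N.
    by apply: leq_trans (card_size _) _; rewrite size_codom card_ord.
  have -> : #|[pred l : 'I_n | l \notin codom f]| = #|[predC mem (codom f)]|.
    by apply: eq_card => l.
  rewrite leq_subLR; move: HC Hc.
  set a := #|mem (codom f)|; set b := #|[predC mem (codom f)]|.
  move=> HC Hc; lia.
pose g : 'I_(n - t) -> 'I_n := fun j => nth i0 J j.
have gJ : forall j, g j \notin codom f.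
  move=> j; have : g j \in J by apply: mem_nth; apply: leq_trans sJ.
  by rewrite mem_enum.
have ginj : injective g.
  move=> a b; rewrite /g => /eqP; rewrite nth_uniq ?enum_uniq //.
  - by move/eqP => E'; apply: val_inj.
  - exact: leq_trans (ltn_ord a) sJ.
  - exact: leq_trans (ltn_ord b) sJ.
have YW : forall j, (j < n - t)%N -> Y (t + j)%N = 0.
  pose yW : 'rV[K]_(n - t) := \row_j Y (t + j)%N.
  pose al := fun j => (FracField.tofrac 'X_(g j) : K).
  pose X := \matrix_(j < n - t, j' < n - t) al j' ^+ j.+1.
  have yX : yW *m X = 0.
    apply/rowP => j'; rewrite !mxE.
    have := col (g j'); rewrite big1 ?add0r.
      move=> H; rewrite -[RHS]H; apply: eq_bigr => j _; rewrite !mxE.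
      by rewrite /sg (negbTE (gJ j')).
    by move=> a _; rewrite YB ?mul0r.
  have dX : \det X != 0.
    apply: vdm_neq0.
      move=> a b; rewrite /al => /eqP; rewrite tofrac_eq => /eqP /X_inj.
      exact: ginj.
    by move=> j; rewrite /al tofrac_eq0 X_neq0.
  have yW0 : yW = 0.
    apply/eqP; apply: contraT => ynz.
    have : \det X == 0 by apply/det0P; exists yW.
    by rewrite (negbTE dX).
  move=> j jt; have := congr1 (fun v : 'rV_(n - t) => v 0 (Ordinal jt)) yW0.
  by rewrite !mxE.
move/negP: yn0; apply; apply/eqP/rowP => i; rewrite mxE.
have -> : y 0 i = Y i by rewrite /Y valKd.
case: (ltnP i t) => it; first exact: YB.
rewrite -(subnKC it); apply: YW.
by rewrite ltn_sub2r // (leq_ltn_trans it).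
Qed.

End Core.

Section Main.
Variables (n t : nat) (Bn : nat -> 'rV[int]_n).
Hypotheses (n0 : (0 < n)%N) (tn : (t <= n)%N).
Hypothesis Hfree : forall p, prime p -> forall c : 'rV['F_p]_t,
  \sum_(a < t) c 0 a *: map_mx (intmul 1) (Bn a) = 0 -> c = 0.

Let i0 := Ordinal n0.
Definition rowsF r : 'rV[Frac n]_n :=
  if (r < t)%N then map_mx (intmul 1) (Bn r) else wvec n (r - t).+1.
Let MF := map_mx (@emb n) (MZ t Bn).

Lemma MF_row r : row r MF = rowsF r.
Proof.
apply/rowP => l; rewrite !mxE /rowsZ /rowsF; case: ifP => _; rewrite !mxE //.
exact: emb_int.
Qed.

Lemma detMF : \det MF = emb (\det (MZ t Bn)).
Proof. by rewrite /MF /emb det_map_mx. Qed.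

Lemma detMF_neq0 : \det MF != 0.
Proof. by rewrite detMF; apply: emb_prim_neq0; apply: MZ_prim. Qed.

Lemma mulMF z : z *m MF = \sum_(a < t) z 0 (insubd i0 a) *: map_mx (intmul 1) (Bn a)
   + \sum_(j < n - t) z 0 (insubd i0 (t + j)) *: wvec n j.+1.
Proof.
rewrite mulmx_sum_row.
transitivity (\sum_(r < n) z 0 (insubd i0 r) *: rowsF r).
  by apply: eq_bigr => i _; rewrite MF_row valKd.
rewrite (split_sum (fun r => z 0 (insubd i0 r) *: rowsF r) tn).
congr (_ + _); apply: eq_bigr => i _; rewrite /rowsF; first by rewrite ltn_ord.
by rewrite ltnNge leq_addr /= addKn.
Qed.


Lemma solveMF (x : 'rV[Frac n]_n) : kvec x -> exists Y : nat -> Frac n,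
  (forall r, inK (Y r)) /\
  x = \sum_(a < t) Y a *: map_mx (intmul 1) (Bn a)
   + \sum_(j < n - t) Y (t + j)%N *: wvec n j.+1.
Proof.
move=> kx.
pose d := emb (\det (MZ t Bn)).
pose y := d^-1 *: (x *m map_mx (@emb n) (\adj (MZ t Bn))).
have dn0 : d != 0 by rewrite /d -detMF detMF_neq0.
have yM : y *m MF = x.
  rewrite /y -scalemxAl -mulmxA /emb map_mx_adj mul_adj_mx -/MF.
  rewrite detMF -/d mul_mx_scalar scalerA mulVf // scale1r //.
exists (fun r => y 0 (insubd i0 r)); split; last by rewrite -mulMF yM.
move=> r; rewrite /y !mxE; apply: inKM.
  rewrite -[d^-1]mul1r -emb1; apply: inK_div.
    exact: MZ_homog.
  exact: (MZ_prim n0 tn Hfree).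
apply: inK_sum => l; rewrite !mxE; apply: inKM; first exact: kx.
exact: inK_emb.
Qed.

Lemma uniqMF (al ga : nat -> Frac n) :
  \sum_(a < t) al a *: map_mx (intmul 1) (Bn a)
   + \sum_(j < n - t) ga j *: wvec n j.+1 = 0 ->
  (forall a, (a < t)%N -> al a = 0) /\ (forall j, (j < n - t)%N -> ga j = 0).
Proof.
move=> H.
pose z : 'rV[Frac n]_n := \row_(r < n) (if (r < t)%N then al r else ga (r - t)%N).
have zM : z *m MF = 0.
  rewrite mulMF -[RHS]H; congr (_ + _); apply: eq_bigr => a _; rewrite !mxE.
    by rewrite val_insubd (leq_trans (ltn_ord a) tn) ltn_ord.
  rewrite val_insubd.
  have -> : (t + a < n)%N by rewrite -ltn_subRL.
  by rewrite ltnNge leq_addr /= addKn.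
have z0 : z = 0.
  apply/eqP; apply: contraT => zn.
  have : \det MF == 0 by apply/det0P; exists z.
  by rewrite (negbTE detMF_neq0).
split.
  move=> a at'; have an : (a < n)%N by exact: leq_trans at' tn.
  by have := congr1 (fun v : 'rV_n => v 0 (Ordinal an)) z0; rewrite !mxE /= at'.
move=> j jt; have jn : (t + j < n)%N by rewrite -ltn_subRL.
have := congr1 (fun v : 'rV_n => v 0 (Ordinal jn)) z0; rewrite !mxE /=.
by rewrite ltnNge leq_addr /= addKn.
Qed.

End Main.

Section VS.
Variables (n : nat) (V : 'rV[int]_n -> Prop).
Hypothesis HV : zsubgroup V.

Lemma V0 : V 0. Proof. by case: HV. Qed.
Lemma VB x y : V x -> V y -> V (x - y). Proof. by case: HV => _; apply. Qed.
Lemma VN x : V x -> V (- x). Proof. by move=> Vx; rewrite -sub0r; apply: VB => //; exact: V0. Qed.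
Lemma VD x y : V x -> V y -> V (x + y).
Proof. by move=> Vx Vy; rewrite -[y]opprK; apply: VB => //; apply: VN. Qed.
Lemma VMn x k : V x -> V (x *+ k).
Proof. by move=> Vx; elim: k => [|k IH]; [rewrite mulr0n; exact: V0 | rewrite mulrS; apply: VD]. Qed.
Lemma VZ (z : int) x : V x -> V (z *: x).
Proof.
move=> Vx; case: z => k; first by rewrite -natz scaler_nat; apply: VMn.
by rewrite NegzE scaleNr; apply: VN; rewrite -natz scaler_nat; apply: VMn.
Qed.
Lemma Vsum m (F : 'I_m -> 'rV[int]_n) : (forall j, V (F j)) -> V (\sum_(j < m) F j).
Proof.
move=> H; elim/big_ind: _ => //; [exact: V0 | exact: VD].
Qed.
End VS.

Lemma free_modp n (V : 'rV[int]_n -> Prop) r (b : 'I_r -> 'rV[int]_n) :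
  direct_summand V ->
  (forall j, V (b j)) ->
  (forall c : 'I_r -> int, \sum_(j < r) c j *: b j = 0 -> forall j, c j = 0) ->
  (forall x, V x -> exists c : 'I_r -> int, x = \sum_(j < r) c j *: b j) ->
  forall p, prime p -> forall c : 'rV['F_p]_r,
  \sum_(a < r) c 0 a *: map_mx (intmul 1) (b a) = 0 -> c = 0.
Proof.
move=> [HV [U [HU [VU VUdec]]]] Vb bfree bspan p pp c Hc.
pose ct (a : 'I_r) : int := Posz (nat_of_ord (c 0 a)).
have ctE : forall a, ((ct a)%:~R : 'F_p) = c 0 a by move=> a; exact: natr_Zp.
pose v := \sum_(a < r) ct a *: b a.
have Vv : V v by apply: Vsum => // a; apply: VZ.
have vp : forall l : 'I_n, (p %| v ord0 l)%Z.
  move=> l; apply: Fp_int_eq0 => //.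
  have := congr1 (fun w : 'rV_n => w 0 l) Hc; rewrite !mxE summxE => H.
  rewrite -[RHS]H /v summxE rmorph_sum; apply: eq_bigr => a _.
  by rewrite !mxE rmorphM /= ctE.
pose u := \row_(l < n) ((v ord0 l) %/ p)%Z.
have vu : v = (p%:Z) *: u.
  by apply/rowP => l; rewrite !mxE mulrC divzK.
have [a0 [bb [Va [Ubb ua]]]] := VUdec u.
have pbb0 : (p%:Z) *: bb = 0.
  apply: VU.
    have -> : (p%:Z) *: bb = v - (p%:Z) *: a0 by rewrite vu ua scalerDr addrC addKr.
    by apply: VB => //; apply: VZ.
  exact: VZ.
have bb0 : bb = 0.
  apply/rowP => l; have := congr1 (fun w : 'rV_n => w 0 l) pbb0; rewrite !mxE.
  move/eqP; rewrite mulf_eq0 => /orP [|/eqP //].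
  by move/eqP => /= E; move: (prime_gt0 pp); rewrite -[p]/(`|p%:Z|%N) E.
have Vu : V u by rewrite ua bb0 addr0.
have [e ue] := bspan u Vu.
have : \sum_(j < r) (ct j - p%:Z * e j) *: b j = 0.
  rewrite (eq_bigr (fun j => ct j *: b j - (p%:Z * e j) *: b j)); last first.
    by move=> j _; rewrite scalerBl.
  rewrite sumrB -/v vu ue scaler_sumr; apply/eqP; rewrite subr_eq0; apply/eqP.
  by apply: eq_bigr => j _; rewrite scalerA.
move/bfree => H; apply/rowP => a; rewrite mxE -ctE.
have -> : ct a = p%:Z * e a by apply/eqP; rewrite -subr_eq0; apply/eqP; apply: H.
by rewrite rmorphM /= -[(p%:Z)%:~R]/(p%:R) pchar_Fp_0 // mul0r.
Qed.

Lemma kspan_ind n (S Q : 'rV[Frac n]_n -> Prop) :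
  Q 0 -> (forall x y, Q x -> Q y -> Q (x + y)) ->
  (forall a x, inK a -> Q x -> Q (a *: x)) -> (forall x, S x -> Q x) ->
  forall x, kspan S x -> Q x.
Proof.
move=> Q0 QD QZ QS x [m [c [u [Hc [Hu ->]]]]].
elim/big_ind: _ => // j _; apply: QZ => //; exact: QS.
Qed.

Lemma kspanS n (S : 'rV[Frac n]_n -> Prop) x : S x -> kspan S x.
Proof.
move=> Sx; exists 1%N, (fun=> 1), (fun=> x); split; first by move=> _; exact: inK1.
by split => //; rewrite big_ord1 scale1r.
Qed.

Definition Bof n r (b : 'I_r -> 'rV[int]_n) (k : nat) : 'rV[int]_n :=
  oapp b 0 (insub k : option 'I_r).

Lemma BofE n r (b : 'I_r -> 'rV[int]_n) (a : 'I_r) : Bof b a = b a.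
Proof. by rewrite /Bof valK. Qed.

Lemma free_prefix n r (b : 'I_r -> 'rV[int]_n) t : (t <= r)%N ->
  (forall p, prime p -> forall c : 'rV['F_p]_r,
    \sum_(a < r) c 0 a *: map_mx (intmul 1) (b a) = 0 -> c = 0) ->
  forall p, prime p -> forall c : 'rV['F_p]_t,
    \sum_(a < t) c 0 a *: map_mx (intmul 1) (Bof b a) = 0 -> c = 0.
Proof.
move=> tr H p pp c Hc.
pose cn k := oapp (fun a : 'I_t => c 0 a) 0 (insub k).
pose c' : 'rV['F_p]_r := \row_(a < r) cn a.
have : c' = 0.
  apply: (H p pp); rewrite -[RHS]Hc.
  transitivity (\sum_(a < r) cn a *: map_mx (intmul 1) (Bof b a)).
    by apply: eq_bigr => a _; rewrite mxE BofE.
  rewrite (split_sum (fun a => cn a *: map_mx (intmul 1) (Bof b a)) tr).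
  rewrite [X in _ + X]big1 ?addr0.
    by apply: eq_bigr => a _; rewrite /cn valK.
  by move=> j _; rewrite /cn insubF ?scale0r // ltnNge leq_addr.
move=> c'0; apply/rowP => a; have ar : (a < r)%N := leq_trans (ltn_ord a) tr.
have := congr1 (fun v : 'rV_r => v 0 (Ordinal ar)) c'0.
by rewrite !mxE /cn /= valK.
Qed.

Lemma rank_bound n r (b : 'I_r -> 'rV[int]_n) :
  (forall p, prime p -> forall c : 'rV['F_p]_r,
    \sum_(a < r) c 0 a *: map_mx (intmul 1) (b a) = 0 -> c = 0) ->
  (r <= n)%N.
Proof.
move=> H; rewrite leqNgt; apply/negP => nr.
pose A : 'M['F_2]_(r, n) := \matrix_(a < r, l < n) (b a 0 l)%:~R.
have : (\rank A < r)%N by apply: leq_ltn_trans (rank_leq_col A) nr.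
move=> /dep_exists [y yn0 yA]; move/negP: yn0; apply; apply/eqP.
apply: (H 2%N) => //; rewrite -[RHS]yA mulmx_sum_row; apply: eq_bigr => a _.
by congr (_ *: _); apply/rowP => l; rewrite !mxE.
Qed.

Section Lin.
Variables (n r : nat) (V : 'rV[int]_n -> Prop) (b : 'I_r -> 'rV[int]_n).
Hypothesis bspan : forall x, V x -> exists c : 'I_r -> int, x = \sum_(j < r) c j *: b j.

Definition LinB (x : 'rV[Frac n]_n) := exists al : nat -> Frac n,
  x = \sum_(a < r) al a *: map_mx (intmul 1) (Bof b a).

Lemma LinB_induced x : induced V x -> LinB x.
Proof.
apply: kspan_ind.
- by exists (fun=> 0); rewrite big1 // => a _; rewrite scale0r.
- move=> x1 x2 [a1 ->] [a2 ->]; exists (fun k => a1 k + a2 k).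
  by rewrite -big_split; apply: eq_bigr => a _; rewrite scalerDl.
- move=> c x1 _ [a1 ->]; exists (fun k => c * a1 k).
  by rewrite scaler_sumr; apply: eq_bigr => a _; rewrite scalerA.
move=> x1 [v [Vv ->]]; have [e ->] := bspan Vv.
exists (fun k => (oapp e 0 (insub k : option 'I_r))%:~R).
apply/rowP => l; rewrite !mxE !summxE rmorph_sum; apply: eq_bigr => a _.
by rewrite !mxE valK BofE /= rmorphM.
Qed.
End Lin.

Definition LinW n q (x : 'rV[Frac n]_n) := exists ga : nat -> Frac n,
  x = \sum_(j < q) ga j *: wvec n j.+1.

Lemma LinW_W n i x : @Wsub n i x -> LinW (n - i) x.
Proof.
apply: kspan_ind.
- by exists (fun=> 0); rewrite big1 // => a _; rewrite scale0r.
- move=> x1 x2 [a1 ->] [a2 ->]; exists (fun k => a1 k + a2 k).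
  by rewrite -big_split; apply: eq_bigr => a _; rewrite scalerDl.
- move=> c x1 _ [a1 ->]; exists (fun k => c * a1 k).
  by rewrite scaler_sumr; apply: eq_bigr => a _; rewrite scalerA.
move=> x1 [k [/andP [k1 kn] ->]].
have kk : (k.-1 < n - i)%N by rewrite prednK.
exists (fun j => if j == k.-1 then 1 else 0).
rewrite (bigD1 (Ordinal kk)) //= eqxx scale1r prednK // big1 ?addr0 //.
move=> j /eqP jk; case: eqP => [E|_]; last by rewrite scale0r.
by case: jk; apply: val_inj.
Qed.

Unset Implicit Arguments. Set Strict Implicit. Set Printing Implicit Defensive.

Theorem lemma3p1 (n i : nat) (V : 'rV[int]_n -> Prop) :
  (1 <= n)%N -> (i <= n)%N -> direct_summand V ->
  (zrank V i ->
     (forall x, kvec x -> exists a b,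
          induced V a /\ @Wsub n i b /\ x = a + b) /\
     (forall x, induced V x -> @Wsub n i x -> x = 0)) /\
  (forall r : nat, zrank V r -> (i < r)%N ->
     exists x, induced V x /\ @Wsub n i x /\
       exists (m : nat) (b : 'I_m.+1 -> 'rV[Frac n]_n),
         kbasis (@Wsub n i) b /\ b ord0 = x).
Proof.
move=> n1 ileq DS.
split.
  move=> [b [Vb bfree bspan]].
  have Hr := free_modp DS Vb bfree bspan.
  have Hf := free_prefix (leqnn i) Hr.
  split.
    move=> x kx; have [Y [HY E]] := solveMF n1 ileq Hf kx.
    exists (\sum_(a < i) Y a *: map_mx (intmul 1) (Bof b a)).
    exists (\sum_(j < n - i) Y (i + j)%N *: wvec n j.+1).
    split; last split; last exact: E.
      exists i, (fun a : 'I_i => Y a), (fun a : 'I_i => map_mx (intmul 1) (Bof b a)).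
      split => //; split => // a.
      by exists (b a); rewrite BofE; split.
    exists (n - i)%N, (fun j : 'I_(n - i) => Y (i + j)%N).
    exists (fun j : 'I_(n - i) => wvec n j.+1); split => //; split => // j.
    by exists j.+1; split => //; rewrite /= ltn_ord.
  move=> x Hi Hw.
  have [al Ea] := LinB_induced bspan Hi.
  have [ga Eg] := LinW_W Hw.
  have := uniqMF n1 ileq Hf (al := al) (ga := fun j => - ga j).
  case.
    rewrite -Ea (eq_bigr (fun j : 'I_(n - i) => - (ga j *: wvec n j.+1))).
      by rewrite sumrN -Eg subrr.
    by move=> j _; rewrite scaleNr.
  by move=> H0 _; rewrite Ea big1 // => a _; rewrite H0 // scale0r.
move=> r [b [Vb bfree bspan]] ir.
have Hr := free_modp DS Vb bfree bspan.
have rn := rank_bound Hr.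
have iin : (i < n)%N := leq_trans ir rn.
have Hf1 := free_prefix ir Hr.
have Hf0 := free_prefix (ltnW ir) Hr.
set m := (n - i.+1)%N.
have Hm : (n - i)%N = m.+1 by rewrite /m subnS prednK // subn_gt0.
have kw : kvec (wvec n (n - i)) by move=> l; rewrite mxE; exact: inK_emb.
have [Y [HY E]] := solveMF n1 iin Hf1 kw.
set x := \sum_(a < i.+1) Y a *: map_mx (intmul 1) (Bof b a).
rewrite -/m in E.
pose Y' j := Y (i.+1 + j)%N.
have xW : Wsub i x.
  exists m.+1, (fun k : 'I_m.+1 => if (k < m)%N then - Y' k else 1).
  exists (fun k : 'I_m.+1 => wvec n k.+1).
  split.
    by move=> k; case: ifP => _; [apply: inKN; exact: HY | exact: inK1].
  split.
    by move=> k; exists k.+1; split => //; rewrite /= Hm ltn_ord.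
  rewrite big_ord_recr /= ltnn scale1r -Hm E.
  rewrite (eq_bigr (fun k : 'I_m => - (Y' k *: wvec n k.+1))); last first.
    by move=> k _; rewrite ltn_ord scaleNr.
  by rewrite sumrN addrCA addNr addr0.
exists x; split.
  exists i.+1, (fun a : 'I_i.+1 => Y a), (fun a : 'I_i.+1 => map_mx (intmul 1) (Bof b a)).
  split => //; split => // a.
  exists (Bof b a); split => //; rewrite /Bof; case: insub => [j|] /=; first exact: Vb.
  exact: V0 (proj1 DS).
split; first exact: xW.
pose bb : 'I_m.+1 -> 'rV[Frac n]_n := fun k => if val k == 0%N then x else wvec n k.
exists m, bb; split; last by [].
split.
- move=> k; rewrite /bb; case: eqP => [_|k0]; first exact: xW.
  apply: kspanS; exists k; split => //; apply/andP; split.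
    by rewrite lt0n; apply/eqP.
  by rewrite Hm ltnW.
- move=> c Hc Hsum.
  pose cn j := c (inord j).
  have cE : forall k : 'I_m.+1, c k = cn k by move=> k; rewrite /cn inord_val.
  rewrite big_ord_recl in Hsum.
  have Hx : x = wvec n m.+1 - \sum_(j < m) Y' j *: wvec n j.+1.
    by rewrite -Hm E addrK.
  have Hs : cn 0%N *: x + \sum_(k < m) cn k.+1 *: wvec n k.+1 = 0.
    rewrite -[RHS]Hsum /bb /= cE; congr (_ + _); apply: eq_bigr => k _.
    by rewrite cE.
  have := uniqMF n1 (ltnW iin) Hf0 (al := fun=> 0)
    (ga := fun j => if (j < m)%N then cn j.+1 - cn 0%N * Y' j else cn 0%N).
  case.
    rewrite big1; last by move=> a _; rewrite scale0r.
    rewrite add0r Hm big_ord_recr /= ltnn -[RHS]Hs Hx.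
    rewrite (eq_bigr (fun j : 'I_m => cn j.+1 *: wvec n j.+1 - cn 0%N *: (Y' j *: wvec n j.+1))); last first.
      by move=> j _; rewrite ltn_ord scalerBl scalerA.
    by rewrite sumrB -scaler_sumr scalerBr addrC addrA addrAC.
  move=> _ H k; rewrite cE.
  case: (posnP k) => [k0|kp].
    by have := H m; rewrite Hm ltnSn ltnn k0 => ->.
  have km : (k.-1 < m)%N by rewrite -ltnS prednK.
  have := H k.-1; rewrite Hm ltnS (ltnW km) km prednK // => /(_ isT).
  have -> : cn 0%N = 0 by have := H m; rewrite Hm ltnSn ltnn => ->.
  by rewrite mul0r subr0.
move=> v; apply: (kspan_ind (Q := fun v => exists c : 'I_m.+1 -> Frac n,
   (forall j, inK (c j)) /\ v = \sum_(k < m.+1) c k *: bb k)).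
- exists (fun=> 0); split; first by move=> _; exact: inK0.
  by rewrite big1 // => k _; rewrite scale0r.
- move=> x1 x2 [c1 [H1 ->]] [c2 [H2 ->]]; exists (fun k => c1 k + c2 k); split.
    by move=> k; apply: inKD.
  by rewrite -big_split; apply: eq_bigr => k _; rewrite scalerDl.
- move=> a x1 Ha [c1 [H1 ->]]; exists (fun k => a * c1 k); split.
    by move=> k; apply: inKM.
  by rewrite scaler_sumr; apply: eq_bigr => k _; rewrite scalerA.
move=> x1 [k [/andP [k1 kn] ->]].
rewrite Hm in kn.
case: (ltnP k m.+1) => km; last first.
  have {}km : k = m.+1 by apply/eqP; rewrite eqn_leq kn km.
  exists (fun j : 'I_m.+1 => if val j == 0%N then 1 else Y' (val j).-1); split.
    by move=> j; case: eqP => _; [exact: inK1 | exact: HY].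
  rewrite big_ord_recl /= /bb /= scale1r km -Hm E; congr (_ + _).
exists (fun j : 'I_m.+1 => if val j == k then 1 else 0); split.
  by move=> j; case: eqP => _; [exact: inK1 | exact: inK0].
rewrite (bigD1 (Ordinal km)) //= eqxx scale1r big1 ?addr0.
  by rewrite /bb /=; case: eqP => // k0; rewrite k0 in k1.
move=> j /eqP jk; case: eqP => [E'|_]; last by rewrite scale0r.
by case: jk; apply: val_inj.
Qed.
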